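(* For all $k,l\ge1$, $X\in\mathfrak{W}'_k$ and $Y\in\mathfrak{W}'_l$, there exists $V\in\mathfrak{W}'_{k+l}$ with $(\lambda(X)-X)(\lambda(Y)-Y)=\lambda(V)-V$ as operators on $\mathfrak{H}^1$.
   Context: Let $\mathfrak{H}=\mathbb{Q}\langle x,y\rangle$, $\mathfrak{H}^1=\mathbb{Q}+\mathfrak{H}y$, $\mathfrak{H}^1_n$ its homogeneous part of degree $n$; $L_w(w')=ww'$; products of operators denote composition. Let $z_k=x^{k-1}y$. The harmonic product $\ast$ on $\mathfrak{H}^1$ is the $\mathbb{Q}$-bilinear map with $1\ast w=w\ast1=w$ and $z_kw\ast z_lw'=z_k(w\ast z_lw')+z_l(z_kw\ast w')+z_{k+l}(w\ast w')$; $\mathcal{H}_w(v)=w\ast v$. $\mathfrak{W}$ is the $\mathbb{Q}$-span of the operators $\mathcal{H}_w$ ($w\in\mathfrak{H}^1$) on $\mathfrak{H}^1$; $\mathfrak{W}'$ (resp. $\mathfrak{W}'_n$) the $\mathbb{Q}$-span of the operators $L_{z_k}\mathcal{H}_w$ on $\mathfrak{H}^1$ with $k\ge1$, $w\in\mathfrak{H}^1$ (resp. $1\le k\le n$, $w\in\mathfrak{H}^1_{n-k}$). The $L_{z_k}\mathcal{H}_w$ over distinct pairs $(k,w)$, $w$ a word, are linearly independent, and $\lambda:\mathfrak{W}'\to\mathfrak{W}$ is the $\mathbb{Q}$-linear map with $\lambda(L_{z_k}\mathcal{H}_w)=\mathcal{H}_{z_kw}$. *)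

(* Defs.v *)
From HB Require Import structures.
From mathcomp Require Import all_boot all_order all_algebra.
Set Implicit Arguments. Unset Strict Implicit. Unset Printing Implicit Defensive.
Import GRing.Theory Num.Theory.
Local Open Scope ring_scope.

(* A word of H^1 = Q + H y is a word in the letters z_k = x^(k-1) y (k >= 1);
   we encode the word z_{k1} z_{k2} ... z_{kr} as the sequence [:: k1; ...; kr]
   (the empty sequence is the empty word 1). *)
Definition word := seq nat.
Definition zword (w : word) : bool := all (fun k => (0 < k)%N) w.
Definition wdeg (w : word) : nat := sumn w.

(* An element of H^1 is a finite formal Q-linear combination of words,
   represented as a list of (coefficient, word) pairs. *)
Definition poly := seq (rat * word).
Definition inH1 (p : poly) : bool := all (fun cw => zword cw.2) p.
Definition coef (p : poly) (u : word) : rat :=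
  \sum_(cw <- p | cw.2 == u) cw.1.

Definition scalep (c : rat) (p : poly) : poly := [seq (c * cw.1, cw.2) | cw <- p].
Definition addp (p q : poly) : poly := p ++ q.
Definition subp (p q : poly) : poly := p ++ scalep (-1) q.
Definition consp (k : nat) (p : poly) : poly := [seq (cw.1, k :: cw.2) | cw <- p].
Definition linext (f : word -> poly) (p : poly) : poly :=
  flatten [seq scalep cw.1 (f cw.2) | cw <- p].

Fixpoint harm (u : word) : word -> poly :=
  match u with
  | [::] => fun v => [:: (1, v)]
  | a :: u' =>
      fix harm_v (v : word) : poly :=
        match v with
        | [::] => [:: (1, a :: u')]
        | b :: v' => consp a (harm u' v) ++ consp b (harm_v v')
                     ++ consp (a + b)%N (harm u' v')
        end
  end.

Definition op := poly -> poly.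
Definition Hop (w : word) : op := linext (harm w).
Definition Lz (k : nat) : op := consp k.

(* An element of W' is given as a finite Q-linear combination
   sum_i c_i L_{z_{k_i}} H_{w_i} with w_i words of H^1; it is represented by
   the list of triples (c_i, k_i, w_i). *)
Definition comb := seq (rat * nat * word).

Definition opW' (X : comb) : op :=
  fun p => flatten [seq scalep t.1.1 (Lz t.1.2 (Hop t.2 p)) | t <- X].
(* lambda(X) = sum_i c_i H_{z_{k_i} w_i}  (well defined by the linear
   independence of the L_{z_k} H_w stated in the context) *)
Definition lam (X : comb) : op :=
  fun p => flatten [seq scalep t.1.1 (Hop (t.1.2 :: t.2) p) | t <- X].

Definition lamsub (X : comb) : op := fun p => subp (lam X p) (opW' X p).

Definition inW'n (n : nat) (X : comb) : bool :=
  all (fun t => [&& (1 <= t.1.2 <= n)%N, zword t.2 & wdeg t.2 == (n - t.1.2)%N]) X.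

Definition op_eq_H1 (A B : op) : Prop :=
  forall p : poly, inH1 p -> forall u : word, coef (A p) u = coef (B p) u.

(* Main.v *)
From Pilot Require Import Defs.
From HB Require Import structures.
From mathcomp Require Import all_boot all_order all_algebra.
From Stdlib Require Import Lia.
Set Implicit Arguments. Unset Strict Implicit. Unset Printing Implicit Defensive.
Import GRing.Theory Num.Theory.
Import Pilot.Defs.
Local Open Scope ring_scope.

Definition pairing (p : poly) (g : word -> rat) : rat := \sum_(cw <- p) cw.1 * g cw.2.
Definition Hk (w v : word) (g : word -> rat) : rat := pairing (harm w v) g.

Lemma pairing_cat p q g : pairing (p ++ q) g = pairing p g + pairing q g.
Proof. by rewrite /pairing big_cat. Qed.
Lemma pairing_consp k p g : pairing (consp k p) g = pairing p (fun s => g (k :: s)).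
Proof. by rewrite /pairing /consp big_map. Qed.
Lemma pairing_scalep c p g : pairing (scalep c p) g = c * pairing p g.
Proof. by rewrite /pairing /scalep big_map mulr_sumr; apply: eq_bigr => cw _ /=; rewrite mulrA. Qed.
Lemma pairing1 c w g : pairing [:: (c, w)] g = c * g w.
Proof. by rewrite /pairing big_seq1. Qed.
Lemma pairing_nil g : pairing [::] g = 0.
Proof. by rewrite /pairing big_nil. Qed.
Lemma eq_pairing p g g' : g =1 g' -> pairing p g = pairing p g'.
Proof. by move=> e; rewrite /pairing; apply: eq_bigr => cw _; rewrite e. Qed.
Lemma pairing_add p f1 f2 : pairing p (fun s => f1 s + f2 s) = pairing p f1 + pairing p f2.
Proof. by rewrite /pairing -big_split; apply: eq_bigr => cw _; rewrite mulrDr. Qed.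
Lemma pairing_sub p f1 f2 : pairing p (fun s => f1 s - f2 s) = pairing p f1 - pairing p f2.
Proof. by rewrite /pairing -sumrB; apply: eq_bigr => cw _; rewrite mulrBr. Qed.
Lemma pairing_mul p c f : pairing p (fun s => c * f s) = c * pairing p f.
Proof. by rewrite /pairing mulr_sumr; apply: eq_bigr => cw _; rewrite mulrCA. Qed.
Lemma pairing_sum p (I : Type) (r : seq I) F :
  pairing p (fun s => \sum_(i <- r) F i s) = \sum_(i <- r) pairing p (F i).
Proof.
rewrite /pairing; under eq_bigr => cw _ do rewrite mulr_sumr.
by rewrite exchange_big.
Qed.
Lemma pairing_linext f p g : pairing (linext f p) g = pairing p (fun w => pairing (f w) g).
Proof.
rewrite /linext /pairing big_flatten /= big_map; apply: eq_bigr => cw _.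
by rewrite -/(pairing _ _) pairing_scalep.
Qed.

Lemma harm_nil_r w : harm w [::] = [:: (1, w)].
Proof. by case: w. Qed.
Lemma harm_nil_l w : harm [::] w = [:: (1, w)].
Proof. by []. Qed.
Lemma harm_cc a u b v : harm (a :: u) (b :: v) =
  consp a (harm u (b :: v)) ++ consp b (harm (a :: u) v) ++ consp (a + b)%N (harm u v).
Proof. by []. Qed.

Lemma Hk_cc a u b v g : Hk (a :: u) (b :: v) g =
  Hk u (b :: v) (fun s => g (a :: s)) + Hk (a :: u) v (fun s => g (b :: s))
  + Hk u v (fun s => g ((a + b)%N :: s)).
Proof. by rewrite /Hk harm_cc !pairing_cat !pairing_consp addrA. Qed.
Lemma Hk_nil_l w g : Hk [::] w g = g w.
Proof. by rewrite /Hk pairing1 mul1r. Qed.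
Lemma Hk_nil_r w g : Hk w [::] g = g w.
Proof. by rewrite /Hk harm_nil_r pairing1 mul1r. Qed.

Lemma pairing_Hk_ccl P d c x g :
  pairing P (fun s => Hk (d :: s) (c :: x) g) =
  pairing P (fun s => Hk s (c :: x) (fun s0 => g (d :: s0)))
  + pairing P (fun s => Hk (d :: s) x (fun s0 => g (c :: s0)))
  + pairing P (fun s => Hk s x (fun s0 => g ((d + c)%N :: s0))).
Proof. by rewrite -!pairing_add; apply: eq_pairing => s; rewrite Hk_cc. Qed.
Lemma pairing_Hk_ccr P d c u g :
  pairing P (fun s => Hk (d :: u) (c :: s) g) =
  pairing P (fun s => Hk u (c :: s) (fun s0 => g (d :: s0)))
  + pairing P (fun s => Hk (d :: u) s (fun s0 => g (c :: s0)))
  + pairing P (fun s => Hk u s (fun s0 => g ((d + c)%N :: s0))).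
Proof. by rewrite -!pairing_add; apply: eq_pairing => s; rewrite Hk_cc. Qed.

Lemma assoc u v x g :
  pairing (harm u v) (fun s => Hk s x g) = pairing (harm v x) (fun s => Hk u s g).
Proof.
elim: u v x g => [|a u' IHu] v x g.
  by rewrite harm_nil_l pairing1 mul1r; apply: eq_pairing => s; rewrite Hk_nil_l.
elim: v x g => [|b v' IHv] x g.
  by rewrite harm_nil_r harm_nil_l !pairing1 !mul1r.
elim: x g => [|c x' IHx] g.
  by rewrite harm_nil_r pairing1 mul1r; apply: eq_pairing => s; rewrite Hk_nil_r.
rewrite [in LHS]harm_cc ![in LHS]pairing_cat ![in LHS]pairing_consp.
rewrite ![in LHS]pairing_Hk_ccl.
have Fc : pairing (harm u' (b :: v')) (fun s => Hk (a :: s) x' (fun s0 => g (c :: s0)))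
   + pairing (harm (a :: u') v') (fun s => Hk (b :: s) x' (fun s0 => g (c :: s0)))
   + pairing (harm u' v') (fun s => Hk ((a + b)%N :: s) x' (fun s0 => g (c :: s0)))
   = pairing (harm (b :: v') x') (fun s => Hk (a :: u') s (fun s0 => g (c :: s0))).
  by rewrite -IHx [in RHS]harm_cc !pairing_cat !pairing_consp addrA.
rewrite [in RHS]harm_cc ![in RHS]pairing_cat ![in RHS]pairing_consp.
rewrite ![in RHS]pairing_Hk_ccr.
have Fa : pairing (harm v' (c :: x')) (fun s => Hk u' (b :: s) (fun s0 => g (a :: s0)))
   + pairing (harm (b :: v') x') (fun s => Hk u' (c :: s) (fun s0 => g (a :: s0)))
   + pairing (harm v' x') (fun s => Hk u' ((b + c)%N :: s) (fun s0 => g (a :: s0)))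
   = pairing (harm u' (b :: v')) (fun s => Hk s (c :: x') (fun s0 => g (a :: s0))).
  by rewrite IHu [in RHS]harm_cc ![in RHS]pairing_cat ![in RHS]pairing_consp addrA.
rewrite [LHS](@GRing.add rat).[AC (3*(3*3)) ((2*5*8)*1*3*4*6*7*9)] Fc.
rewrite [RHS](@GRing.add rat).[AC (3*(3*3)) ((1*4*7)*2*3*5*6*8*9)] Fa.
rewrite !IHu !IHv addnA.
by rewrite [LHS](@GRing.add rat).[ACl 2*4*6*1*3*5*7].
Qed.

Lemma eq_Hk w v g g' : g =1 g' -> Hk w v g = Hk w v g'.
Proof. exact: eq_pairing. Qed.
Lemma assocH u v x g : Hk v x (fun s => Hk u s g) = pairing (harm u v) (fun s => Hk s x g).
Proof. exact: (esym (assoc u v x g)). Qed.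

Definition J (X : comb) (v : word) (g : word -> rat) : rat :=
  \sum_(t <- X) t.1.1 * (Hk (t.1.2 :: t.2) v g - Hk t.2 v (fun s => g (t.1.2 :: s))).

Lemma J_nil X g : J X [::] g = 0.
Proof.
rewrite /J big1_seq // => t _; rewrite !Hk_nil_r subrr mulr0 //.
Qed.

Lemma J_cons X m v g : J X (m :: v) g =
  \sum_(t <- X) t.1.1 * (Hk (t.1.2 :: t.2) v (fun s => g (m :: s))
                         + Hk t.2 v (fun s => g ((t.1.2 + m)%N :: s))).
Proof.
rewrite /J; apply: eq_bigr => t _; congr (_ * _).
by rewrite Hk_cc; apply/eqP; rewrite subr_eq [X in _ == X]addrC !addrA.
Qed.

Lemma J_cat X1 X2 v g : J (X1 ++ X2) v g = J X1 v g + J X2 v g.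
Proof. by rewrite /J big_cat. Qed.
Lemma J_flatten (I : Type) (r : seq I) (f : I -> comb) v g :
  J (flatten [seq f i | i <- r]) v g = \sum_(i <- r) J (f i) v g.
Proof. by rewrite /J big_flatten /= big_map. Qed.

Lemma sum_map_pairing (a : rat) (k : nat) (P : poly) (F : nat -> word -> rat) :
  \sum_(t <- [seq (a * e.1, k, e.2) | e <- P]) t.1.1 * F t.1.2 t.2 = a * pairing P (F k).
Proof.
by rewrite big_map /pairing mulr_sumr; apply: eq_bigr => e _ /=; rewrite mulrA.
Qed.

Lemma sum_block (a : rat) (k : nat) (P : poly) v m g :
  \sum_(t <- [seq (a * e.1, k, e.2) | e <- P])
     t.1.1 * (Hk (t.1.2 :: t.2) v (fun s => g (m :: s))
              + Hk t.2 v (fun s => g ((t.1.2 + m)%N :: s)))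
  = a * pairing P (fun u => Hk (k :: u) v (fun s => g (m :: s))
              + Hk u v (fun s => g ((k + m)%N :: s))).
Proof.
by rewrite big_map /pairing mulr_sumr; apply: eq_bigr => e _ /=; rewrite mulrA.
Qed.

Definition blocks (x y : rat * nat * word) : comb :=
  [seq (x.1.1 * y.1.1 * e.1, x.1.2, e.2) | e <- harm x.2 (y.1.2 :: y.2)] ++
  [seq (x.1.1 * y.1.1 * e.1, y.1.2, e.2) | e <- harm (x.1.2 :: x.2) y.2] ++
  [seq (x.1.1 * y.1.1 * e.1, (x.1.2 + y.1.2)%N, e.2) | e <- harm x.2 y.2].

Definition mkV (X Y : comb) : comb :=
  flatten [seq flatten [seq blocks x y | x <- X] | y <- Y].

Lemma Hk_J X w v m g : Hk w v (fun s => J X (m :: s) g) =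
  \sum_(t <- X) t.1.1 * (Hk w v (fun s => Hk (t.1.2 :: t.2) s (fun s0 => g (m :: s0)))
       + Hk w v (fun s => Hk t.2 s (fun s0 => g ((t.1.2 + m)%N :: s0)))).
Proof.
rewrite (eq_Hk _ _ (fun s => J_cons X m s g)) /Hk pairing_sum.
by apply: eq_bigr => t _; rewrite pairing_mul pairing_add.
Qed.

Lemma main_kernel X Y v g : J Y v (fun s => J X s g) = J (mkV X Y) v g.
Proof.
case: v => [|m v]; first by rewrite !J_nil.
rewrite J_cons /mkV J_flatten; apply: eq_bigr => y _.
rewrite !Hk_J J_flatten -big_split mulr_sumr; apply: eq_bigr => x _.
rewrite J_cons !big_cat /= !sum_block !pairing_add.
case: x => [[c k] w]; case: y => [[d l] w'] /=.
rewrite -/(harm (k :: w) w') !assocH [in LHS]harm_cc ![in LHS]pairing_cat ![in LHS]pairing_consp addnA.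
rewrite -mulrDr mulrA [d * c]mulrC -!mulrDr; congr (_ * _).
by rewrite [LHS](@GRing.add rat).[AC (((1*2)*1)*2) ((1*4)*((2*5)*(3*6)))].
Qed.

Lemma pairing_flatten (I : Type) (r : seq I) (f : I -> poly) g :
  pairing (flatten [seq f i | i <- r]) g = \sum_(i <- r) pairing (f i) g.
Proof. by rewrite /pairing big_flatten /= big_map. Qed.

Lemma pairing_lamsub X p g : pairing (lamsub X p) g = pairing p (fun v => J X v g).
Proof.
rewrite /lamsub /subp pairing_cat pairing_scalep /lam /opW' !pairing_flatten.
rewrite /J pairing_sum -mulN1r mulr_sumr -big_split /=.
apply: eq_bigr => t _.
rewrite pairing_mul pairing_sub !pairing_scalep /Hop /Lz pairing_consp !pairing_linext.
by rewrite mulr1 mulN1r mulrBr.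
Qed.

Lemma coef_pairing p u : coef p u = pairing p (fun s => (s == u)%:R).
Proof.
rewrite /coef /pairing big_mkcond; apply: eq_bigr => cw _.
by case: eqP => _; rewrite ?mulr1 ?mulr0.
Qed.

Lemma harm_deg a b : all (fun cw => wdeg cw.2 == (wdeg a + wdeg b)%N) (harm a b).
Proof.
elim: a b => [|x a IHa] b; first by rewrite /= eqxx.
elim: b => [|y b IHb]; first by rewrite /= addn0 eqxx.
rewrite harm_cc !all_cat !all_map; apply/and3P; split.
- apply/allP => cw /(allP (IHa _)) /eqP /= e.
  by rewrite /wdeg /= -/(wdeg _) e !addnA.
- apply/allP => cw /(allP IHb) /eqP /= e.
  rewrite /wdeg /= -/(wdeg _) e /wdeg /=. by rewrite addnCA !addnA.
- apply/allP => cw /(allP (IHa _)) /eqP /= e.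
  rewrite /wdeg /= -/(wdeg _) e /wdeg /=. apply/eqP.
  by rewrite -!addnA; congr (_ + _)%N; rewrite addnCA.
Qed.

Lemma harm_z a b : zword a -> zword b -> all (fun cw => zword cw.2) (harm a b).
Proof.
elim: a b => [|x a IHa] b; first by move=> _ /= ->.
elim: b => [|y b IHb]; first by move=> /= ->.
move=> za0 zb0; have /andP [x0 za] := za0; have /andP [y0 zb] := zb0.
rewrite harm_cc !all_cat !all_map; apply/and3P; split.
- apply/allP => cw /(allP (IHa _ za zb0)) /= ->. by rewrite x0. 
- apply/allP => cw /(allP (IHb za0 zb)) /= ->. by rewrite y0.
- apply/allP => cw /(allP (IHa _ za zb)) /= ->. by rewrite addn_gt0 x0.
Qed.

Lemma ar1 K L k : (k <= K)%N -> (K - k + L)%N = (K + L - k)%N.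
Proof. move=> /leP h; rewrite -!plusE -!minusE; lia. Qed.
Lemma ar2 K L l : (l <= L)%N -> (K + (L - l))%N = (K + L - l)%N.
Proof. move=> /leP h; rewrite -!plusE -!minusE; lia. Qed.
Lemma ar3 K L k l : (k <= K)%N -> (l <= L)%N -> (K - k + (L - l))%N = (K + L - (k + l))%N.
Proof. move=> /leP h /leP h'; rewrite -!plusE -!minusE; lia. Qed.
Lemma ar4 k l K L : (1 <= k <= K)%N -> (1 <= l <= L)%N -> (1 <= k <= K + L)%N.
Proof. move=> /andP[/leP h1 /leP h2] /andP[/leP h3 /leP h4]; apply/andP; split; apply/leP; rewrite -?plusE; lia. Qed.
Lemma ar5 k l K L : (1 <= k <= K)%N -> (1 <= l <= L)%N -> (1 <= l <= K + L)%N.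
Proof. move=> /andP[/leP h1 /leP h2] /andP[/leP h3 /leP h4]; apply/andP; split; apply/leP; rewrite -?plusE; lia. Qed.
Lemma ar6 k l K L : (1 <= k <= K)%N -> (1 <= l <= L)%N -> (1 <= k + l <= K + L)%N.
Proof. move=> /andP[/leP h1 /leP h2] /andP[/leP h3 /leP h4]; apply/andP; split; apply/leP; rewrite -?plusE; lia. Qed.

Lemma all_flatten' (T : Type) (P : pred T) (ss : seq (seq T)) :
  all P (flatten ss) = all (all P) ss.
Proof. by elim: ss => //= s ss IH; rewrite all_cat IH. Qed.

Lemma wdeg_cons a w : wdeg (a :: w) = (a + wdeg w)%N.
Proof. by []. Qed.

Lemma mkV_in K L X Y : inW'n K X -> inW'n L Y -> inW'n (K + L) (mkV X Y).
Proof.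
move=> HX HY; rewrite /inW'n /mkV all_flatten' all_map; apply/allP => y Hy /=.
rewrite all_flatten' all_map; apply/allP => x Hx /=.
have /and3P [kx zx dx] := allP HX x Hx.
have /and3P [ly zy dy] := allP HY y Hy.
have kK : (x.1.2 <= K)%N by case/andP: kx.
have lL : (y.1.2 <= L)%N by case/andP: ly.
have zly : zword (y.1.2 :: y.2) by rewrite /= zy andbT; case/andP: ly.
have zkx : zword (x.1.2 :: x.2) by rewrite /= zx andbT; case/andP: kx.
rewrite /blocks !all_cat !all_map; apply/and3P; split; apply/allP => e He /=.
- rewrite (ar4 kx ly) (allP (harm_z zx zly) e He) /=.
  rewrite (eqP (allP (harm_deg _ _) e He)) (eqP dx) wdeg_cons (eqP dy).
  by rewrite subnKC // ar1.
- rewrite (ar5 kx ly) (allP (harm_z zkx zy) e He) /=.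
  rewrite (eqP (allP (harm_deg _ _) e He)) wdeg_cons (eqP dx) (eqP dy).
  by rewrite subnKC // ar2.
- rewrite (ar6 kx ly) (allP (harm_z zx zy) e He) /=.
  rewrite (eqP (allP (harm_deg _ _) e He)) (eqP dx) (eqP dy).
  by rewrite ar3.
Qed.

Theorem mainTheorem13 (k l : nat) (X Y : comb) :
  (1 <= k)%N -> (1 <= l)%N -> inW'n k X -> inW'n l Y ->
  exists V : comb, inW'n (k + l) V /\
    op_eq_H1 (fun p => lamsub X (lamsub Y p)) (lamsub V).
Proof.
move=> _ _ HX HY; exists (mkV X Y); split; first exact: mkV_in.
move=> p _ u; rewrite !coef_pairing !pairing_lamsub.
by apply: eq_pairing => v; exact: main_kernel.
Qed.
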